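(* Let $(T_0,\widetilde T_0)$ be a joint pair of closed abstract Friedrichs operators on a complex Hilbert space $\mathcal{H}$, with $T_1:=\widetilde T_0^*$, $\widetilde T_1:=T_0^*$, $\mathcal{W}_0:=\operatorname{dom}T_0=\operatorname{dom}\widetilde T_0$ and $\mathcal{W}:=\operatorname{dom}T_1=\operatorname{dom}\widetilde T_1$ equipped with the graph norm of $T_1$. Let $\mathcal{V}$ be a closed subspace of $\mathcal{W}$ with $\mathcal{W}_0\subseteq\mathcal{V}$. Then $T_1|_{\mathcal{V}}:\mathcal{V}\to\mathcal{H}$ is bijective if and only if $\mathcal{V}\dotplus\operatorname{ker}T_1=\mathcal{W}$ (i.e. $\mathcal{V}\cap\operatorname{ker}T_1=\{0\}$ and $\mathcal{V}+\operatorname{ker}T_1=\mathcal{W}$).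
   Context: $\mathcal{H}$ is a complex Hilbert space with inner product $\langle\cdot,\cdot\rangle$ and norm $\|\cdot\|$. A pair $(T,\widetilde T)$ of densely defined linear operators on $\mathcal{H}$ is a joint pair of abstract Friedrichs operators if: (T1) $T$ and $\widetilde T$ have a common dense domain $\mathcal{D}$ and $\langle T\varphi,\psi\rangle=\langle\varphi,\widetilde T\psi\rangle$ for all $\varphi,\psi\in\mathcal{D}$; (T2) there is $c>0$ with $\|(T+\widetilde T)\varphi\|\le c\|\varphi\|$ for all $\varphi\in\mathcal{D}$; (T3) there is $\mu_0>0$ with $\langle (T+\widetilde T)\varphi,\varphi\rangle\ge 2\mu_0\|\varphi\|^2$ for all $\varphi\in\mathcal{D}$. A joint pair of closed abstract Friedrichs operators is such a pair $(T_0,\widetilde T_0)$ in which both operators are closed. One has $T_0\subseteq T_1$, $\widetilde T_0\subseteq\widetilde T_1$ and $\operatorname{dom}T_1=\operatorname{dom}\widetilde T_1$. *)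

(* Defs.v *)
From mathcomp Require Import all_boot all_order all_algebra.
From mathcomp Require Import reals.
From mathcomp Require Export complex.

Set Implicit Arguments.
Unset Strict Implicit.
Unset Printing Implicit Defensive.

Import Order.TTheory GRing.Theory Num.Theory.
Local Open Scope ring_scope.

Section Hilbert.
Variables (R : realType) (H : lmodType R[i]) (ip : H -> H -> R[i]).

Definition hnorm (x : H) : R := Num.sqrt (complex.Re (ip x x)).

Definition hcvg (u : nat -> H) (l : H) : Prop :=
  forall e : R, 0 < e -> exists N : nat, forall n, (N <= n)%N -> hnorm (u n - l) < e.

Definition hcauchy (u : nat -> H) : Prop :=
  forall e : R, 0 < e -> exists N : nat,
    forall m n, (N <= m)%N -> (N <= n)%N -> hnorm (u m - u n) < e.

Definition is_hilbert : Prop :=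
  [/\ forall (a : R[i]) (x y z : H), ip (a *: x + y) z = a * ip x z + ip y z,
      forall x y : H, ip y x = (ip x y)^*,
      forall x : H, 0 <= ip x x,
      forall x : H, ip x x = 0 -> x = 0
    & forall u : nat -> H, hcauchy u -> exists l, hcvg u l].

End Hilbert.

(* A (possibly unbounded) operator on H: a domain and an action
   (the action is only meaningful on the domain). *)
Record op (H : Type) := Op { dom : H -> Prop ; app : H -> H }.

Section Operators.
Variables (R : realType) (H : lmodType R[i]) (ip : H -> H -> R[i]).

Definition is_subspace (D : H -> Prop) : Prop :=
  D 0 /\ forall (a : R[i]) x y, D x -> D y -> D (a *: x + y).

Definition is_linear_op (T : op H) : Prop :=
  is_subspace (dom T) /\
  forall (a : R[i]) x y, dom T x -> dom T y -> app T (a *: x + y) = a *: app T x + app T y.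

Definition is_dense (D : H -> Prop) : Prop :=
  forall (x : H) (e : R), 0 < e -> exists y, D y /\ hnorm ip (x - y) < e.

Definition densely_defined (T : op H) : Prop := is_linear_op T /\ is_dense (dom T).

Definition closed_op (T : op H) : Prop :=
  forall (u : nat -> H) (x y : H), (forall n, dom T (u n)) ->
    hcvg ip u x -> hcvg ip (fun n => app T (u n)) y -> dom T x /\ app T x = y.

Definition is_adjoint (S A : op H) : Prop :=
  (forall u, dom A u <-> exists w, forall phi, dom S phi -> ip (app S phi) u = ip phi w) /\
  (forall u, dom A u -> forall phi, dom S phi -> ip (app S phi) u = ip phi (app A u)).

Definition friedrichs_pair (T Tt : op H) : Prop :=
  [/\ densely_defined T /\ densely_defined Tt,
      (forall x, dom T x <-> dom Tt x),
      (forall phi psi, dom T phi -> dom T psi -> ip (app T phi) psi = ip phi (app Tt psi)),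
      (exists c : R, 0 < c /\ forall phi, dom T phi ->
          hnorm ip (app T phi + app Tt phi) <= c * hnorm ip phi)
    & (exists mu0 : R, 0 < mu0 /\ forall phi, dom T phi ->
          real_complex R (2 * mu0 * hnorm ip phi ^+ 2) <= ip (app T phi + app Tt phi) phi)].

Definition closed_friedrichs_pair (T Tt : op H) : Prop :=
  [/\ friedrichs_pair T Tt, closed_op T & closed_op Tt].

(* V is a closed subspace of W := dom T1 equipped with the graph norm of T1 *)
Definition graph_closed_subspace (T1 : op H) (V : H -> Prop) : Prop :=
  [/\ forall x, V x -> dom T1 x,
      is_subspace V
    & forall (v : nat -> H) (u : H), (forall n, V (v n)) -> dom T1 u ->
        hcvg ip v u -> hcvg ip (fun n => app T1 (v n)) (app T1 u) -> V u].

End Operators.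

(* Main.v *)
Require Import Defs.
From mathcomp Require Import all_boot all_order all_algebra.
From mathcomp Require Import reals complex.
From mathcomp Require Import ring lra.
From mathcomp Require Import boolp classical_sets.

Import Order.TTheory GRing.Theory Num.Theory.
Local Open Scope complex_scope.
Local Open Scope ring_scope.

Section Basics.
Variables (R : realType) (H : lmodType R[i]) (ip : H -> H -> R[i]).
Hypothesis Hh : is_hilbert ip.

Lemma ReM_real (r : R) (z : R[i]) : complex.Re (r%:C * z) = r * complex.Re z.
Proof. by case: z => a b /=; ring. Qed.
Lemma ImM_real (r : R) (z : R[i]) : complex.Im (r%:C * z) = r * complex.Im z.
Proof. by case: z => a b /=; ring. Qed.
Lemma Re_conj (z : R[i]) : complex.Re (z^*)%C = complex.Re z.
Proof. by case: z. Qed.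
Lemma Re_i (z : R[i]) : complex.Re ('i%C * z) = - complex.Im z.
Proof. by case: z => a b /=; ring. Qed.
Lemma ReD' (z w : R[i]) : complex.Re (z + w) = complex.Re z + complex.Re w.
Proof. by case: z; case: w. Qed.
Lemma ReN' (z : R[i]) : complex.Re (- z) = - complex.Re z.
Proof. by case: z. Qed.

Lemma conjB (z w : R[i]) : ((z - w)^* = z^* - w^*)%C.
Proof. case: z; case: w => a b c d /=. by congr (_ +i* _); ring. Qed.
Lemma conjD (z w : R[i]) : ((z + w)^* = z^* + w^*)%C.
Proof. case: z; case: w => a b c d /=. by congr (_ +i* _); ring. Qed.
Lemma conjM (z w : R[i]) : ((z * w)^* = z^* * w^*)%C.
Proof. case: z; case: w => a b c d /=. by congr (_ +i* _); ring. Qed.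

Lemma ip0l z : ip 0 z = 0.
Proof.
case: Hh => lin _ _ _ _.
have := lin 1 0 0 z; rewrite scale1r addr0 mul1r => h.
by apply: (addrI (ip 0 z)); rewrite addr0 -h.
Qed.
Lemma ipZl a x z : ip (a *: x) z = a * ip x z.
Proof. case: Hh => lin _ _ _ _. by have := lin a x 0 z; rewrite addr0 ip0l addr0. Qed.
Lemma ipDl x y z : ip (x + y) z = ip x z + ip y z.
Proof. case: Hh => lin _ _ _ _. by have := lin 1 x y z; rewrite scale1r mul1r. Qed.
Lemma ipNl x z : ip (- x) z = - ip x z.
Proof. by rewrite -scaleN1r ipZl mulN1r. Qed.
Lemma ipBl x y z : ip (x - y) z = ip x z - ip y z.
Proof. by rewrite ipDl ipNl. Qed.
Lemma ipC x y : ip y x = (ip x y)^*%C.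
Proof. by case: Hh. Qed.
Lemma ip0r z : ip z 0 = 0.
Proof. by rewrite ipC ip0l conjc0. Qed.
Lemma ipBr x y z : ip z (x - y) = ip z x - ip z y.
Proof. by rewrite [LHS]ipC ipBl conjB (ipC x z) (ipC y z). Qed.
Lemma ipZr a x z : ip z (a *: x) = (a^*)%C * ip z x.
Proof. by rewrite [LHS]ipC ipZl conjM (ipC x z). Qed.
Lemma ipDr x y z : ip z (x + y) = ip z x + ip z y.
Proof. by rewrite [LHS]ipC ipDl conjD (ipC x z) (ipC y z). Qed.

Definition rp x y := complex.Re (ip x y).
Definition nn x := rp x x.

Lemma rpC x y : rp x y = rp y x.
Proof. by rewrite /rp ipC Re_conj. Qed.
Lemma rpDl x y z : rp (x + y) z = rp x z + rp y z.
Proof. by rewrite /rp ipDl ReD'. Qed.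
Lemma rpNl x z : rp (- x) z = - rp x z.
Proof. by rewrite /rp ipNl ReN'. Qed.
Lemma rpBl x y z : rp (x - y) z = rp x z - rp y z.
Proof. by rewrite rpDl rpNl. Qed.
Lemma rpZl (r : R) x z : rp (r%:C *: x) z = r * rp x z.
Proof. by rewrite /rp ipZl ReM_real. Qed.
Lemma rpDr x y z : rp z (x + y) = rp z x + rp z y.
Proof. by rewrite rpC rpDl !(rpC z). Qed.
Lemma rpNr x z : rp z (- x) = - rp z x.
Proof. by rewrite rpC rpNl rpC. Qed.
Lemma rpBr x y z : rp z (x - y) = rp z x - rp z y.
Proof. by rewrite rpDr rpNr. Qed.
Lemma rpZr (r : R) x z : rp z (r%:C *: x) = r * rp z x.
Proof. by rewrite rpC rpZl rpC. Qed.
Lemma rp0l z : rp 0 z = 0.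
Proof. by rewrite /rp ip0l. Qed.
Lemma rp0r z : rp z 0 = 0.
Proof. by rewrite /rp ip0r. Qed.

Lemma nn_ge0 x : 0 <= nn x.
Proof. case: Hh => _ _ pos _ _. by have := pos x; rewrite lecE => /andP[_]. Qed.
Lemma nn_eq0 x : nn x = 0 -> x = 0.
Proof.
case: Hh => _ _ pos def _ => h; apply: def.
move: (pos x); rewrite lecE /= => /andP[/eqP him _].
move: h; rewrite /nn /rp; case: (ip x x) him => a b /= -> ->. by [].
Qed.

Lemma hnorm_nn x : hnorm ip x ^+ 2 = nn x.
Proof. by rewrite /hnorm sqr_sqrtr // nn_ge0. Qed.

Lemma hnorm_lt x e : 0 < e -> (hnorm ip x < e) <-> (nn x < e ^+ 2).
Proof.
move=> e0; rewrite -hnorm_nn; have s0 : 0 <= hnorm ip x by rewrite /hnorm sqrtr_ge0.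
move: (hnorm ip x) s0 => s s0; split => h; nra.
Qed.


Lemma nnD x y : nn (x + y) = nn x + 2 * rp x y + nn y.
Proof. rewrite /nn rpDl !rpDr (rpC y x); ring. Qed.
Lemma nnB x y : nn (x - y) = nn x - 2 * rp x y + nn y.
Proof. rewrite /nn rpBl !rpBr (rpC y x); ring. Qed.
Lemma nnZ (r : R) x : nn (r%:C *: x) = r ^+ 2 * nn x.
Proof. rewrite /nn rpZl rpZr; ring. Qed.
Lemma nnN x : nn (- x) = nn x.
Proof. by rewrite /nn rpNl rpNr opprK. Qed.

Lemma amgm (t : R) x y : 2 * t * rp x y <= t ^+ 2 * nn x + nn y.
Proof.
have := nn_ge0 (t%:C *: x - y); rewrite nnB nnZ rpZl; lra.
Qed.

Lemma cs x y : rp x y ^+ 2 <= nn x * nn y.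
Proof.
have [ny0|ny0] := eqVneq (nn y) 0.
  have y0 : y = 0 by apply: nn_eq0.
  by rewrite ny0 y0 rp0r expr0n /= mulr0.
have nyp : 0 < nn y by rewrite lt_def ny0 nn_ge0.
have := nn_ge0 ((nn y)%:C *: x - (rp x y)%:C *: y).
rewrite nnB !nnZ rpZl rpZr => h.
have h2 : 0 <= nn y * (nn y * nn x - rp x y ^+ 2) by move: h; nra.
rewrite pmulr_rge0 // in h2; lra.
Qed.

Lemma dense_uniq (D : H -> Prop) z : is_dense ip D ->
  (forall phi, D phi -> rp phi z = 0) -> z = 0.
Proof.
move=> dD h0; apply: nn_eq0.
have := nn_ge0 z; rewrite le_eqVlt => /orP[/eqP <-//|zp].
have e0 : 0 < Num.sqrt (nn z) by rewrite sqrtr_gt0.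
have [y [Dy]] := dD z _ e0.
rewrite hnorm_lt // sqr_sqrtr ?nn_ge0 // nnB (rpC z y) h0 // => h.
have := nn_ge0 y; lra.
Qed.

Lemma eps_mono {N n : nat} : (N <= n)%N -> (n.+1%:R : R)^-1 <= (N.+1%:R)^-1.
Proof. by move=> h; rewrite lef_pV2 ?posrE ?ltr0n // ler_nat. Qed.

Lemma eps_small (d : R) : 0 < d -> exists N : nat, forall n, (N <= n)%N -> (n.+1%:R : R)^-1 < d.
Proof.
move=> d0; have [N hN] := ltr_add_invr d0; exists N => n hn.
rewrite add0r in hN; exact: (le_lt_trans (eps_mono hn) hN).
Qed.


Section Core.
Variables (D : H -> Prop) (S : H -> H) (mu : R).
Hypothesis HD : is_subspace D.
Hypothesis HS : forall (a : R[i]) x y, D x -> D y -> S (a *: x + y) = a *: S x + S y.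
Hypothesis mu0 : 0 < mu.
Hypothesis coer : forall phi, D phi -> mu * nn phi <= rp (S phi) phi.

Lemma D0 : D 0. Proof. by case: HD. Qed.
Lemma DZ a x : D x -> D (a *: x).
Proof. by move=> Dx; case: HD => _ h; have := h a x 0 Dx D0; rewrite addr0. Qed.
Lemma DD x y : D x -> D y -> D (x + y).
Proof. by move=> Dx Dy; case: HD => _ h; have := h 1 x y Dx Dy; rewrite scale1r. Qed.
Lemma S0 : S 0 = 0.
Proof.
have := HS 1 0 0 D0 D0; rewrite !scale1r addr0 => h.
by apply: (addrI (S 0)); rewrite addr0 -h.
Qed.
Lemma SZ a x : D x -> S (a *: x) = a *: S x.
Proof. by move=> Dx; have := HS a x 0 Dx D0; rewrite !addr0 S0 addr0. Qed.
Lemma SD x y : D x -> D y -> S (x + y) = S x + S y.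
Proof. by move=> Dx Dy; have := HS 1 x y Dx Dy; rewrite !scale1r. Qed.

Lemma bbelow phi : D phi -> mu ^+ 2 * nn phi <= nn (S phi).
Proof.
move=> Dphi; have h1 := coer _ Dphi; have h2 := amgm mu phi (S phi).
rewrite (rpC phi) in h2.
have h4 : mu * (mu * nn phi) <= mu * rp (S phi) phi by rewrite ler_pM2l.
rewrite expr2; lra.
Qed.

Variable f : H.
Definition J psi := nn (S psi) - 2 * rp psi f.

Lemma J_lb psi : D psi -> - nn f <= mu ^+ 2 * J psi.
Proof.
move=> Dpsi; have h1 := bbelow _ Dpsi; have h2 := amgm (mu ^+ 2) psi f.
rewrite /J; nra.
Qed.

Definition E : set R := (fun r => exists psi, D psi /\ r = J psi).
Definition m := inf E.

Lemma has_inf_E : has_inf E.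
Proof.
split; first by exists (J 0); exists 0; split => //; exact: D0.
exists (- nn f / mu ^+ 2) => r [psi [Dpsi ->]].
rewrite ler_pdivrMr ?exprn_gt0 // mulrC; exact: J_lb.
Qed.

Lemma m_le psi : D psi -> m <= J psi.
Proof. by move=> Dpsi; apply: (ge_inf has_inf_E.2); exists psi. Qed.

Lemma approx (n : nat) : exists psi, D psi /\ J psi < m + (n.+1%:R)^-1.
Proof.
have ep : (0 : R) < (n.+1%:R)^-1 by rewrite invr_gt0 ltr0n.
have [r [psi [Dpsi ->]] h] := inf_adherent ep has_inf_E.
by exists psi.
Qed.


Lemma paral a b : D a -> D b -> nn (S a - S b) <= 2 * (J a + J b) - 4 * m.
Proof.
move=> Da Db.
have Dc : D ((2^-1 : R)%:C *: (a + b)) by apply: DZ; apply: DD.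
have hS : S ((2^-1 : R)%:C *: (a + b)) = (2^-1 : R)%:C *: (S a + S b).
  by rewrite SZ ?SD //; apply: DD.
have := m_le _ Dc; rewrite /J hS nnZ nnD rpZl rpDl nnB.
move=> h; lra.
Qed.

Lemma exists_g : exists g, forall phi, D phi -> rp (S phi) g = rp phi f.
Proof.
case: (choice approx) => ps hps.
pose u := fun n => S (ps n).
have cau : hcauchy ip u.
  move=> e e0.
  have e4 : 0 < e ^+ 2 / 4 by rewrite divr_gt0 // exprn_gt0.
  have [N hN] := eps_small _ e4.
  exists N => n k hn hk.
  rewrite hnorm_lt //.
  have := paral _ _ (hps n).1 (hps k).1. have := (hps n).2; have := (hps k).2.
  have hN' : forall n', (N <= n')%N -> 4 * (n'.+1%:R)^-1 < e ^+ 2.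
    by move=> n' /hN; rewrite ltr_pdivlMr // mulrC.
  have := hN' n hn; have := hN' k hk. rewrite /u /=.
  move: (n.+1%:R^-1 : R) (k.+1%:R^-1 : R) (J (ps n)) (J (ps k)) (nn (S (ps n) - S (ps k))) => a b c d z.
  lra.
case: Hh => _ _ _ _ complete.
have [g hg] := complete u cau.
exists g => phi Dphi.
pose C := nn (S phi).
have C0 : 0 <= C := nn_ge0 _.
pose L := rp g (S phi) - rp phi f.
suff : L = 0 by rewrite /L rpC; lra.
have Lnb : forall n, (rp (u n) (S phi) - rp phi f) ^+ 2 < (n.+1%:R)^-1 * (C + 1).
  move=> n.
  pose Ln := rp (u n) (S phi) - rp phi f.
  pose en : R := (n.+1%:R)^-1.
  have key : forall t : R, 0 < en + 2 * t * Ln + t ^+ 2 * C.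
    move=> t.
    have Dp : D (ps n + t%:C *: phi) by apply: DD; [exact: (hps n).1 | exact: DZ].
    have := m_le _ Dp; have := (hps n).2.
    have hS : S (ps n + t%:C *: phi) = S (ps n) + t%:C *: S phi.
      by rewrite SD ?SZ //; [exact: (hps n).1 | exact: DZ].
    rewrite /J hS nnD nnZ rpZr rpDl rpZl /Ln /en /C /u/=. move: (n.+1%:R^-1 : R) => en0. lra.
  pose t := - Ln / (C + 1).
  have C1 : C + 1 != 0 by rewrite gt_eqF // ltr_pwDr.
  have ht : Ln = - (t * (C + 1)) by rewrite /t !mulNr divfK // opprK.
  have := key t; rewrite -/Ln -/en ht.
  have ep : 0 < en by rewrite invr_gt0 ltr0n.
  move=> h.
  have h2 : t ^+ 2 * (C + 1) < en by nra.
  have h3 : t ^+ 2 * (C + 1) * (C + 1) < en * (C + 1) by rewrite ltr_pM2r // ltr_pwDr.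
  have -> : (- (t * (C + 1))) ^+ 2 = t ^+ 2 * (C + 1) * (C + 1) by ring.
  exact: h3.
apply/eqP/contraT => L0.
have Lp : 0 < L ^+ 2 by rewrite lt_def sqrf_eq0 L0 sqr_ge0.
have C1p : 0 < C + 1 by rewrite ltr_pwDr.
pose d := L ^+ 2 / (4 * (C + 1)).
have dp : 0 < d by rewrite divr_gt0 // mulr_gt0.
have hd : d * (4 * (C + 1)) = L ^+ 2 by rewrite /d divfK // gt_eqF // mulr_gt0.
have ep : 0 < Num.sqrt d by rewrite sqrtr_gt0.
have [N1 hN1] := hg _ ep.
have [N2 hN2] := eps_small _ dp.
pose n := maxn N1 N2.
have h1 : nn (u n - g) < d.
  have := hN1 n (leq_maxl _ _); rewrite hnorm_lt // sqr_sqrtr //; exact: ltW.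
have h2 : (n.+1%:R : R)^-1 < d := hN2 n (leq_maxr _ _).
have h3 := Lnb n.
pose A := rp (u n) (S phi) - rp phi f.
have h4 : (L - A) ^+ 2 <= nn (g - u n) * C.
  have -> : L - A = rp (g - u n) (S phi) by rewrite /L /A rpBl; ring.
  exact: cs.
have h5 : nn (g - u n) = nn (u n - g) by rewrite -nnN opprB.
have h3' : (n.+1%:R : R)^-1 * (C + 1) < d * (C + 1) by rewrite ltr_pM2r.
have h4' : nn (g - u n) * C <= d * C by rewrite ler_wpM2r // h5 ltW.
have h7 : 2 * A ^+ 2 + 2 * (L - A) ^+ 2 - L ^+ 2 = (L - 2 * A) ^+ 2 by ring.
have h8 := sqr_ge0 (L - 2 * A).
rewrite -/A in h3.
move: h3 h3' h4 h4' h7 h8 hd.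
move: (A ^+ 2) ((L - A) ^+ 2) ((L - 2 * A) ^+ 2) (nn (g - u n)) ((n.+1%:R : R)^-1 * (C + 1)) => a1 a2 a3 a4 a5.
move=> *; nra.
Qed.

Lemma complex_eq2 (z w : R[i]) : complex.Re z = complex.Re w -> complex.Im z = complex.Im w -> z = w.
Proof. by case: z; case: w => a b c d /= -> ->. Qed.

Lemma exists_gc : exists g, forall phi, D phi -> ip (S phi) g = ip phi f.
Proof.
have [g hg] := exists_g; exists g => phi Dphi.
apply: complex_eq2; first exact: hg.
have := hg ('i%C *: phi) (DZ _ _ Dphi).
rewrite SZ // /rp !ipZl !Re_i; lra.
Qed.

End Core.

Section Main.
Variables (T0 T0t T1 : op H) (V : H -> Prop).
Hypothesis HF : closed_friedrichs_pair ip T0 T0t.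
Hypothesis Hadj : is_adjoint ip T0t T1.

Let Sd := dom T0t.
Let Sa := app T0t.

Lemma Sd_sub : is_subspace Sd.
Proof. by case: HF => [[[_ [[]]]]]. Qed.
Lemma Sd_lin : forall (a : R[i]) x y, Sd x -> Sd y -> Sa (a *: x + y) = a *: Sa x + Sa y.
Proof. by case: HF => [[[_ [[]]]]]. Qed.
Lemma Sd_dense : is_dense ip Sd.
Proof. by case: HF => [[[_ []]]]. Qed.

Lemma Sd_coer : exists mu : R, 0 < mu /\ forall phi, Sd phi -> mu * nn phi <= rp (Sa phi) phi.
Proof.
case: HF => [[_ domeq adjT _ [mu [mu0 hmu]]] _ _].
exists mu; split => // phi Sphi.
have Tphi : dom T0 phi by apply/domeq.
have := hmu phi Tphi; rewrite lecE => /andP[_].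
rewrite /= ipDl ReD' -(hnorm_nn phi).
have -> : complex.Re (ip (app T0 phi) phi) = rp (Sa phi) phi.
  by rewrite adjT // -/(rp _ _) rpC.
rewrite -/(rp _ _); lra.
Qed.

Lemma T1_dom0 : dom T1 0.
Proof. case: Hadj => h1 _; apply/h1; exists 0 => phi _; by rewrite !ip0r. Qed.

Lemma T1_sub x y : dom T1 x -> dom T1 y ->
  dom T1 (x - y) /\ app T1 (x - y) = app T1 x - app T1 y.
Proof.
case: Hadj => h1 h2 dx dy.
have dxy : dom T1 (x - y).
  apply/h1; exists (app T1 x - app T1 y) => phi Sphi.
  by rewrite !ipBr h2 // h2.
split => //.
apply/eqP; rewrite -subr_eq0; apply/eqP.
apply: (dense_uniq _ _ Sd_dense) => phi Sphi.
by rewrite /rp ipBr !ipBr -!h2 // ipBr subrr.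
Qed.

Lemma T1_0 : app T1 0 = 0.
Proof. by have [_] := T1_sub _ _ T1_dom0 T1_dom0; rewrite subrr => ->; rewrite subrr. Qed.

Lemma T1_surj f : exists u, dom T1 u /\ app T1 u = f.
Proof.
have [mu [mu0 hmu]] := Sd_coer.
have [g hg] := exists_gc _ _ _ Sd_sub Sd_lin mu0 hmu f.
case: Hadj => h1 h2.
have dg : dom T1 g by apply/h1; exists f.
exists g; split => //.
apply/eqP; rewrite -subr_eq0; apply/eqP.
apply: (dense_uniq _ _ Sd_dense) => phi Sphi.
by rewrite /rp ipBr -h2 // hg // subrr.
Qed.

Lemma main_aux :
  graph_closed_subspace ip T1 V ->
  (forall x, dom T0 x -> V x) ->
  ((forall x y, V x -> V y -> app T1 x = app T1 y -> x = y) /\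
   (forall f : H, exists v, V v /\ app T1 v = f))
  <->
  ((forall x, V x -> app T1 x = 0 -> x = 0) /\
   (forall w, dom T1 w -> exists v k, [/\ V v, dom T1 k, app T1 k = 0 & w = v + k])).
Proof.
case=> VW [V0 Vlin] _ _.
have VB x y : V x -> V y -> V (x - y).
  by move=> Vx Vy; have := Vlin (-1) y x Vy Vx; rewrite scaleN1r addrC.
split.
- case=> inj surj; split.
    move=> x Vx Tx; apply: inj => //; by rewrite Tx T1_0.
  move=> w dw; have [v [Vv Tv]] := surj (app T1 w).
  have [dk Tk] := T1_sub _ _ dw (VW _ Vv).
  exists v, (w - v); split => //; first by rewrite Tk Tv subrr.
  by rewrite addrC subrK.
- case=> ker dec; split.
    move=> x y Vx Vy Txy; apply/eqP; rewrite -subr_eq0; apply/eqP.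
    apply: ker; first exact: VB.
    by have [_ ->] := T1_sub _ _ (VW _ Vx) (VW _ Vy); rewrite Txy subrr.
  move=> f; have [u [du Tu]] := T1_surj f.
  have [v [k [Vv dk Tk eu]]] := dec u du.
  exists v; split => //.
  have [_ e] := T1_sub _ _ du dk.
  by move: e; rewrite eu addrK => ->; rewrite -eu Tu Tk subr0.
Qed.

End Main.

End Basics.

Theorem lemma3p10 (R : realType) (H : lmodType R[i]) (ip : H -> H -> R[i])
  (T0 T0t T1 : op H) (V : H -> Prop) :
  is_hilbert ip ->
  closed_friedrichs_pair ip T0 T0t ->
  is_adjoint ip T0t T1 ->
  graph_closed_subspace ip T1 V ->
  (forall x, dom T0 x -> V x) ->
  ((forall x y, V x -> V y -> app T1 x = app T1 y -> x = y) /\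
   (forall f : H, exists v, V v /\ app T1 v = f))
  <->
  ((forall x, V x -> app T1 x = 0 -> x = 0) /\
   (forall w, dom T1 w -> exists v k, [/\ V v, dom T1 k, app T1 k = 0 & w = v + k])).
Proof.
move=> Hh HF Hadj HV H0.
exact: (@main_aux R H ip Hh T0 T0t T1 V HF Hadj HV H0).
Qed.
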